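(* Let $0<s\le1$ and $n\in\mathbb{N}$. Then for every $t\in\mathbb{R}$ the operator $B_{30}^{(n)}$ defined in the context satisfies, for all $v\in\dot H^s$, $$\|B_{30}^{(n)}(v,v,v)\|_{\dot H^s}\le\frac{\pi^2}{n^s}\|v\|_{\dot H^0}^2\|v\|_{\dot H^s}.$$
   Context: Write $\mathbb{Z}_0=\mathbb{Z}\setminus\{0\}$. For $s\in\mathbb{R}$, $\dot H^s$ denotes the Hilbert space of complex sequences $v=(v_k)_{k\in\mathbb{Z}_0}$ with $\|v\|_{\dot H^s}^2=\sum_{k\in\mathbb{Z}_0}|k|^{2s}|v_k|^2<\infty$. For $n\in\mathbb{N}$, $\Pi_{-n}$ is the projection $(\Pi_{-n}v)_k=0$ if $|k|\le n$ and $(\Pi_{-n}v)_k=v_k$ if $|k|>n$. For $t\in\mathbb{R}$, $$B_{30}^{(n)}(u,v,w)_k=\sum^{\mathrm{nonres}}_{k_1+k_2+k_3=k}\frac{e^{3i(k_1+k_2)(k_2+k_3)(k_3+k_1)t}}{k_1(k_1+k_2)(k_2+k_3)(k_3+k_1)}u_{k_1}(\Pi_{-n}v)_{k_2}(\Pi_{-n}w)_{k_3},\qquad k\in\mathbb{Z}_0,$$ where the sum runs over $k_1,k_2,k_3\in\mathbb{Z}_0$ with $k_1+k_2+k_3=k$ and $(k_1+k_2)(k_2+k_3)(k_3+k_1)\ne0$. *)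

(* Defs.v *)
From Stdlib Require Import Reals Lra ZArith List ClassicalEpsilon Bool.
From Coquelicot Require Import Coquelicot.
Import ListNotations.
Open Scope R_scope.

(* Sequences indexed by Z_0 = Z \ {0}: represented as Z -> C, value at 0 ignored. *)
Definition seqC := Z -> C.

Definition lsum {I : Type} (f : I -> C) (A : list I) : C :=
  fold_right Cplus (RtoC 0) (map f A).

Definition lsumR {I : Type} (f : I -> R) (A : list I) : R :=
  fold_right Rplus 0 (map f A).

(* ||v||_{Hdot^s}^2 in [0, +oo] : supremum of finite partial sums over
   duplicate-free finite subsets of Z_0. *)
Definition hsnorm2 (s : R) (v : seqC) : Rbar :=
  Lub_Rbar (fun x => exists A : list Z, NoDup A /\ (forall k, In k A -> k <> 0%Z) /\
     x = lsumR (fun k => Rpower (IZR (Z.abs k)) (2 * s) * (Cmod (v k))^2) A).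

Definition in_Hdot (s : R) (v : seqC) : Prop := is_finite (hsnorm2 s v).

(* the Hdot^s norm (meaningful when in_Hdot s v) *)
Definition hnorm (s : R) (v : seqC) : R := sqrt (real (hsnorm2 s v)).

Definition Pi_neg (n : nat) (v : seqC) : seqC :=
  fun k => if (Z.abs k <=? Z.of_nat n)%Z then RtoC 0 else v k.

Definition cexpi (theta : R) : C := (cos theta, sin theta).

(* Unconditional (net over finite subsets) summability of a family over Z*Z. *)
Definition HasSum2 (f : Z * Z -> C) (S : C) : Prop :=
  forall eps : R, 0 < eps -> exists A0 : list (Z * Z),
    forall A : list (Z * Z), NoDup A -> incl A0 A -> Cmod (Cminus (lsum f A) S) < eps.

(* The sum, chosen classically (unique when it exists). *)
Definition Sum2 (f : Z * Z -> C) : C :=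
  epsilon (inhabits (RtoC 0)) (fun S => HasSum2 f S).

(* Summand of B_30^{(n)}(u,v,w)_k indexed by (k1,k2), with k3 = k - k1 - k2;
   zero outside the admissible (nonresonant, k_i in Z_0) index set. *)
Definition B30_term (n : nat) (t : R) (u v w : seqC) (k : Z) (p : Z * Z) : C :=
  let k1 := fst p in let k2 := snd p in let k3 := (k - k1 - k2)%Z in
  if (orb (orb (orb (k1 =? 0) (k2 =? 0)) (k3 =? 0))
       ((k1 + k2) * (k2 + k3) * (k3 + k1) =? 0))%Z
  then RtoC 0
  else
    Cmult (Cmult (Cmult
      (Cdiv (cexpi (3 * IZR ((k1 + k2) * (k2 + k3) * (k3 + k1)) * t))
            (RtoC (IZR (k1 * (k1 + k2) * (k2 + k3) * (k3 + k1)))))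
      (u k1)) (Pi_neg n v k2)) (Pi_neg n w k3).

Definition B30 (n : nat) (t : R) (u v w : seqC) : seqC :=
  fun k => Sum2 (B30_term n t u v w k).

(* Main.v *)
Require Import Defs.
From Stdlib Require Import Reals Lra Lia ZArith List Permutation Classical ClassicalEpsilon Bool.
From Coquelicot Require Import Coquelicot.
Import ListNotations.
Open Scope R_scope.

Section LS.
Context {I : Type}.

Lemma lsumR_nil (f : I -> R) : lsumR f [] = 0.
Proof. reflexivity. Qed.
Lemma lsumR_cons (f : I -> R) x L : lsumR f (x :: L) = f x + lsumR f L.
Proof. reflexivity. Qed.
Lemma lsumR_app (f : I -> R) L1 L2 : lsumR f (L1 ++ L2) = lsumR f L1 + lsumR f L2.
Proof. induction L1; unfold lsumR in *; simpl; [ring|rewrite IHL1; ring]. Qed.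
Lemma lsumR_plus (f g : I -> R) L : lsumR (fun x => f x + g x) L = lsumR f L + lsumR g L.
Proof. induction L; unfold lsumR in *; simpl; [ring|]. rewrite IHL; ring. Qed.
Lemma lsumR_scal (c : R) (f : I -> R) L : lsumR (fun x => c * f x) L = c * lsumR f L.
Proof. induction L; unfold lsumR in *; simpl; [ring|]. rewrite IHL; ring. Qed.
Lemma lsumR_opp (f : I -> R) L : lsumR (fun x => - f x) L = - lsumR f L.
Proof. induction L; unfold lsumR in *; simpl; [ring|]. rewrite IHL; ring. Qed.
Lemma lsumR_le (f g : I -> R) L : (forall x, In x L -> f x <= g x) -> lsumR f L <= lsumR g L.
Proof.
  induction L; intros H; unfold lsumR in *; simpl; [lra|].
  assert (f a <= g a) by (apply H; left; auto).
  assert (fold_right Rplus 0 (map f L) <= fold_right Rplus 0 (map g L)) by (apply IHL; intros; apply H; right; auto).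
  lra.
Qed.
Lemma lsumR_nonneg (f : I -> R) L : (forall x, In x L -> 0 <= f x) -> 0 <= lsumR f L.
Proof.
  intros H. replace 0 with (lsumR (fun _ => 0) L). apply lsumR_le; auto.
  induction L; unfold lsumR in *; simpl; auto. rewrite IHL; [ring|]. intros; apply H; right; auto.
Qed.
Lemma lsumR_ext (f g : I -> R) L : (forall x, In x L -> f x = g x) -> lsumR f L = lsumR g L.
Proof.
  intros H; apply Rle_antisym; apply lsumR_le; intros; rewrite H; auto; lra.
Qed.
Lemma lsumR_perm (f : I -> R) L L' : Permutation L L' -> lsumR f L = lsumR f L'.
Proof.
  induction 1; unfold lsumR in *; simpl; try lra.
Qed.
Lemma lsumR_incl (f : I -> R) L1 L2 : NoDup L1 -> NoDup L2 -> incl L1 L2 ->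
  (forall x, 0 <= f x) -> lsumR f L1 <= lsumR f L2.
Proof.
  revert L2; induction L1 as [|x L1 IH]; intros L2 N1 N2 Hi Hf.
  - rewrite lsumR_nil; apply lsumR_nonneg; auto.
  - assert (Hx : In x L2) by (apply Hi; left; auto).
    destruct (in_split _ _ Hx) as [l1 [l2 E]]; subst L2.
    rewrite (lsumR_perm f (l1 ++ x :: l2) (x :: l1 ++ l2)) by (symmetry; apply Permutation_middle).
    rewrite !lsumR_cons.
    inversion N1; subst.
    assert (NoDup (l1 ++ l2)).
    { apply NoDup_remove_1 in N2; auto. }
    assert (lsumR f L1 <= lsumR f (l1 ++ l2)).
    { apply IH; auto. intros y Hy. assert (In y (l1 ++ x :: l2)) by (apply Hi; right; auto).
      apply in_app_or in H0; apply in_or_app; destruct H0 as [H0|[H0|H0]]; auto.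
      subst; contradiction. }
    lra.
Qed.
Lemma lsumR_filter (P : I -> bool) (f : I -> R) L :
  lsumR f L = lsumR f (filter P L) + lsumR f (filter (fun x => negb (P x)) L).
Proof.
  induction L; simpl; [unfold lsumR; simpl; ring|].
  destruct (P a); simpl; rewrite !lsumR_cons, IHL; ring.
Qed.
Lemma lsumR_filter_zero (P : I -> bool) (f : I -> R) L :
  (forall x, P x = false -> f x = 0) -> lsumR f L = lsumR f (filter P L).
Proof.
  intros H. rewrite (lsumR_filter P). replace (lsumR f (filter (fun x => negb (P x)) L)) with 0. ring.
  rewrite (lsumR_ext _ (fun _ => 0)). induction (filter _ L); unfold lsumR in *; simpl; auto; rewrite <- IHl; ring.
  intros x Hx. apply filter_In in Hx. destruct Hx. apply H. destruct (P x); auto.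
Qed.
End LS.

Lemma lsumR_map {I J : Type} (f : J -> R) (h : I -> J) L : lsumR f (map h L) = lsumR (fun x => f (h x)) L.
Proof. unfold lsumR. rewrite map_map. auto. Qed.

Lemma lsum_fst {I : Type} (f : I -> C) L : fst (lsum f L) = lsumR (fun x => fst (f x)) L.
Proof. induction L; simpl; auto. unfold lsum, lsumR in *; simpl. rewrite <- IHL. reflexivity. Qed.
Lemma lsum_snd {I : Type} (f : I -> C) L : snd (lsum f L) = lsumR (fun x => snd (f x)) L.
Proof. induction L; simpl; auto. unfold lsum, lsumR in *; simpl. rewrite <- IHL. reflexivity. Qed.
Lemma fubini_gen {A B : Type} (eqA : forall x y : A, {x = y} + {x <> y})
  (G : A * B -> R) (al : A -> R) (ga : A * B -> R) (Bd : R) :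
  (forall x, 0 <= al x) -> (forall p, 0 <= ga p) ->
  (forall x (L : list B), NoDup L -> lsumR (fun y => ga (x, y)) L <= Bd) ->
  forall U, NoDup U -> forall F, NoDup F -> (forall p, In p F -> In (fst p) U) ->
  (forall p, In p F -> G p <= al (fst p) * ga p) ->
  lsumR G F <= Bd * lsumR al U.
Proof.
  intros Hal Hga HB U; induction U as [|x U IH]; intros NU F NF HF HG.
  - destruct F as [|p F]; [unfold lsumR; simpl; lra|].
    exfalso; apply (HF p); left; auto.
  - assert (HB0 : 0 <= Bd) by (specialize (HB x nil (NoDup_nil _)); unfold lsumR in HB; simpl in HB; lra).
    inversion NU; subst.
    rewrite (lsumR_filter (fun p => if eqA (fst p) x then true else false) G F).
    rewrite lsumR_cons, Rmult_plus_distr_l.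
    apply Rplus_le_compat.
    + set (Fx := filter _ F).
      assert (Hfx : forall p, In p Fx -> fst p = x /\ In p F).
      { intros p Hp; apply filter_In in Hp; destruct Hp as [Q1 Q2]; destruct (eqA (fst p) x); auto; discriminate. }
      apply Rle_trans with (lsumR (fun p => al x * ga (x, snd p)) Fx).
      { apply lsumR_le; intros p Hp; destruct (Hfx p Hp) as [E _].
        destruct p as [p1 p2]; simpl in *; subst; apply HG; apply (proj2 (Hfx _ Hp)). }
      rewrite lsumR_scal, Rmult_comm. apply Rmult_le_compat_r; auto.
      rewrite <- (lsumR_map (fun y => ga (x, y)) snd). apply HB.
      assert (NoDup Fx) by (apply NoDup_filter; auto).
      clear -H Hfx. induction Fx as [|p Fx IHF]; simpl; constructor.
      * intros Hin. apply in_map_iff in Hin. destruct Hin as [q [Eq Hq]].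
        inversion H; subst. apply H2. 
        destruct (Hfx p (or_introl eq_refl)) as [E1 _].
        destruct (Hfx q (or_intror Hq)) as [E2 _].
        destruct p, q; simpl in *; subst; auto.
      * apply IHF; [intros; apply Hfx; right; auto | inversion H; auto].
    + apply IH; auto.
      * apply NoDup_filter; auto.
      * intros p Hp; apply filter_In in Hp; destruct Hp as [Q1 Q2].
        destruct (HF p Q1) as [E|E]; auto. destruct (eqA (fst p) x) as [e|e]; simpl in Q2; [discriminate | congruence].
      * intros p Hp; apply filter_In in Hp; apply HG; tauto.
Qed.

Lemma fubini {A B : Type} (eqA : forall x y : A, {x = y} + {x <> y})
  (G : A * B -> R) (al : A -> R) (ga : A * B -> R) (Bd : R) F :
  (forall x, 0 <= al x) -> (forall p, 0 <= ga p) ->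
  (forall x (L : list B), NoDup L -> lsumR (fun y => ga (x, y)) L <= Bd) ->
  NoDup F -> (forall p, In p F -> G p <= al (fst p) * ga p) ->
  lsumR G F <= Bd * lsumR al (nodup eqA (map fst F)).
Proof.
  intros. apply (fubini_gen eqA G al ga); auto. apply NoDup_nodup.
  intros p Hp; apply nodup_In; apply in_map; auto.
Qed.
Lemma NoDup_map_inj {A B : Type} (f : A -> B) (l : list A) :
  (forall x y, f x = f y -> x = y) -> NoDup l -> NoDup (map f l).
Proof.
  intros Hf; induction 1; simpl; constructor; auto.
  intros Hin; apply in_map_iff in Hin; destruct Hin as [y [E Hy]].
  apply Hf in E; subst; auto.
Qed.

Definition inv2 (x : Z) : R := if (x =? 0)%Z then 0 else / (IZR x ^ 2).
Definition inv4 (x : Z) : R := if (x =? 0)%Z then 0 else / (IZR x ^ 4).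
Definition Sb : R := 2 * (1 + /4 + /9 + /16 + 2/9).
Definition Qb : R := 2 * (1 + /16 + 2/45).

Lemma IZR_pow_pos x k : (x <> 0)%Z -> 0 < IZR x ^ (2 * k).
Proof.
  intros H. rewrite pow_mult. apply pow_lt.
  assert (IZR x <> 0) by (apply not_0_IZR; auto).
  simpl; rewrite Rmult_1_r. apply (Rsqr_pos_lt (IZR x)); auto.
Qed.

Lemma inv2_nonneg x : 0 <= inv2 x.
Proof. unfold inv2; destruct (x =? 0)%Z eqn:E; [lra|]. apply Z.eqb_neq in E.
  apply Rlt_le, Rinv_0_lt_compat. apply (IZR_pow_pos x 1); auto. Qed.
Lemma inv4_nonneg x : 0 <= inv4 x.
Proof. unfold inv4; destruct (x =? 0)%Z eqn:E; [lra|]. apply Z.eqb_neq in E.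
  apply Rlt_le, Rinv_0_lt_compat. apply (IZR_pow_pos x 2); auto. Qed.

Definition zr (M : nat) : list Z := map Z.of_nat (seq 1 M) ++ map (fun k => (- Z.of_nat k)%Z) (seq 1 M).

Lemma zr_NoDup M : NoDup (zr M).
Proof.
  unfold zr; apply NoDup_app.
  - apply NoDup_map_inj; [intros; lia| apply seq_NoDup].
  - apply NoDup_map_inj; [intros; lia| apply seq_NoDup].
  - intros a H1 H2; apply in_map_iff in H1, H2. destruct H1 as [x [E1 H1]]; destruct H2 as [y [E2 H2]].
    apply in_seq in H1; apply in_seq in H2; lia.
Qed.

Definition maxabs (L : list Z) : nat := fold_right (fun x acc => Nat.max (Z.abs_nat x) acc) 0%nat L.

Lemma maxabs_spec L x : In x L -> (Z.abs_nat x <= maxabs L)%nat.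
Proof. induction L; simpl; intros H; [contradiction|]. destruct H; subst; [lia|]. specialize (IHL H); lia. Qed.

Lemma zr_incl L : incl (filter (fun x => negb (x =? 0)%Z) L) (zr (maxabs L)).
Proof.
  intros x Hx. apply filter_In in Hx. destruct Hx as [H1 H2].
  apply maxabs_spec in H1. unfold zr. apply in_or_app.
  destruct (Z_le_dec 0 x).
  - left. apply in_map_iff. exists (Z.to_nat x). split; [lia|]. apply in_seq. destruct (x =? 0)%Z eqn:E; simpl in H2; [discriminate|]. apply Z.eqb_neq in E. lia.
  - right. apply in_map_iff. exists (Z.to_nat (-x)). split; [lia|]. apply in_seq. lia.
Qed.

Lemma sum_zr (g : Z -> R) L (Hg : forall x, 0 <= g x) (H0 : g 0%Z = 0) :
  NoDup L -> lsumR g L <= lsumR g (zr (maxabs L)).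
Proof.
  intros N. rewrite (lsumR_filter_zero (fun x => negb (x =? 0)%Z)).
  apply lsumR_incl; auto. apply NoDup_filter; auto. apply zr_NoDup. apply zr_incl.
  intros x Hx; destruct (x =? 0)%Z eqn:E; simpl in Hx; [|discriminate]. apply Z.eqb_eq in E; subst; auto.
Qed.

Lemma lsumR_seq_S (f : nat -> R) a M : lsumR f (seq a (S M)) = lsumR f (seq a M) + f (a + M)%nat.
Proof. rewrite seq_S, lsumR_app. unfold lsumR at 2; simpl; ring. Qed.

Lemma sum_h2 M : lsumR (fun k => / (INR k ^ 2)) (seq 1 (M + 4)) + / (INR (M + 4) + /2) <= 1 + /4 + /9 + /16 + 2/9.
Proof.
  induction M.
  - simpl. unfold lsumR; simpl. lra.
  - replace (S M + 4)%nat with (S (M + 4)) by lia. rewrite lsumR_seq_S.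
    replace (1 + (M + 4))%nat with (S (M+4)) by lia. cbv beta. rewrite !S_INR.
    set (y := INR (M + 4)) in *. assert (Hy : 4 <= y) by (unfold y; rewrite plus_INR; simpl; pose proof (pos_INR M); lra).
    assert (/ ((y + 1) ^ 2) + / (y + 1 + / 2) <= / (y + /2)).
    { assert (E : / (y + /2) - / (y + 1 + /2) = / ((y + /2) * (y + 1 + /2))) by (field; lra).
      assert (/ ((y + 1) ^ 2) <= / ((y + /2) * (y + 1 + /2))).
      { apply Rinv_le_contravar. nra. nra. }
      lra. }
    lra.
Qed.

Lemma sum_h4 M : lsumR (fun k => / (INR k ^ 4)) (seq 1 (M + 2)) + / (9 * (INR (M + 2) + /2)) <= 1 + /16 + 2/45.
Proof.
  induction M.
  - simpl. unfold lsumR; simpl. lra.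
  - replace (S M + 2)%nat with (S (M + 2)) by lia. rewrite lsumR_seq_S.
    replace (1 + (M + 2))%nat with (S (M+2)) by lia. cbv beta. rewrite !S_INR.
    set (y := INR (M + 2)) in *. assert (Hy : 2 <= y) by (unfold y; rewrite plus_INR; simpl; pose proof (pos_INR M); lra).
    assert (/ ((y + 1) ^ 4) + / (9 * (y + 1 + /2)) <= / (9 * (y + /2))).
    { assert (E : / (9 * (y + /2)) - / (9 * (y + 1 + /2)) = / (9 * ((y + /2) * (y + 1 + /2)))) by (field; lra).
      assert (/ ((y + 1) ^ 4) <= / (9 * ((y + /2) * (y + 1 + /2)))).
      { apply Rinv_le_contravar. nra. 
        assert (9 <= (y+1)^2) by nra. 
        assert ((y + /2) * (y + 1 + /2) <= (y+1)^2) by nra.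
        replace ((y+1)^4) with ((y+1)^2 * (y+1)^2) by ring. nra. }
      lra. }
    lra.
Qed.

Lemma sum_seq_mono (f : nat -> R) M K : (forall k, 0 <= f k) -> lsumR f (seq 1 M) <= lsumR f (seq 1 (M + K)).
Proof. intros H. rewrite seq_app, lsumR_app. assert (0 <= lsumR f (seq (1 + M) K)) by (apply lsumR_nonneg; auto). lra. Qed.

Lemma sum_zr_sym (g : Z -> R) (h : nat -> R) M :
  (forall k, g (Z.of_nat k) = h k) -> (forall k, g (- Z.of_nat k)%Z = h k) ->
  lsumR g (zr M) = 2 * lsumR h (seq 1 M).
Proof.
  intros H1 H2. unfold zr. rewrite lsumR_app, !lsumR_map.
  rewrite (lsumR_ext _ h), (lsumR_ext (fun x => g (- Z.of_nat x)%Z) h); auto. ring.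
Qed.

Lemma inv2_nat k : inv2 (Z.of_nat k) = / (INR k ^ 2).
Proof. unfold inv2. rewrite INR_IZR_INZ. destruct (Z.of_nat k =? 0)%Z eqn:E; auto.
  apply Z.eqb_eq in E. rewrite E. simpl. rewrite Rmult_0_l, Rinv_0; auto. Qed.
Lemma inv2_nnat k : inv2 (- Z.of_nat k)%Z = / (INR k ^ 2).
Proof. unfold inv2. rewrite INR_IZR_INZ, opp_IZR. destruct (- Z.of_nat k =? 0)%Z eqn:E.
  - apply Z.eqb_eq in E. replace (Z.of_nat k) with 0%Z by lia. simpl. rewrite ?Ropp_0, Rmult_0_l, Rinv_0; auto.
  - f_equal; ring. Qed.
Lemma inv4_nat k : inv4 (Z.of_nat k) = / (INR k ^ 4).
Proof. unfold inv4. rewrite INR_IZR_INZ. destruct (Z.of_nat k =? 0)%Z eqn:E; auto.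
  apply Z.eqb_eq in E. rewrite E. simpl. rewrite Rmult_0_l, Rinv_0; auto. Qed.
Lemma inv4_nnat k : inv4 (- Z.of_nat k)%Z = / (INR k ^ 4).
Proof. unfold inv4. rewrite INR_IZR_INZ, opp_IZR. destruct (- Z.of_nat k =? 0)%Z eqn:E.
  - apply Z.eqb_eq in E. replace (Z.of_nat k) with 0%Z by lia. simpl. rewrite ?Ropp_0, Rmult_0_l, Rinv_0; auto.
  - f_equal; ring. Qed.

Lemma sum_inv2 L : NoDup L -> lsumR inv2 L <= Sb.
Proof.
  intros N. apply Rle_trans with (lsumR inv2 (zr (maxabs L))). apply sum_zr; auto. apply inv2_nonneg.
  rewrite (sum_zr_sym _ (fun k => / (INR k ^ 2))) by (intros; (apply inv2_nat || apply inv2_nnat)).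
  unfold Sb. apply Rmult_le_compat_l; [lra|].
  eapply Rle_trans. apply (sum_seq_mono _ _ 4). intros k; destruct k as [|k']; [simpl; rewrite Rmult_0_l, Rinv_0; lra|
  apply Rlt_le, Rinv_0_lt_compat, pow_lt, lt_0_INR; lia].
  pose proof (sum_h2 (maxabs L)). assert (0 < / (INR (maxabs L + 4) + /2)).
  apply Rinv_0_lt_compat. pose proof (pos_INR (maxabs L + 4)). lra. lra.
Qed.

Lemma sum_inv4 L : NoDup L -> lsumR inv4 L <= Qb.
Proof.
  intros N. apply Rle_trans with (lsumR inv4 (zr (maxabs L))). apply sum_zr; auto. apply inv4_nonneg.
  rewrite (sum_zr_sym _ (fun k => / (INR k ^ 4))) by (intros; (apply inv4_nat || apply inv4_nnat)).
  unfold Qb. apply Rmult_le_compat_l; [lra|].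
  eapply Rle_trans. apply (sum_seq_mono _ _ 2). intros k; destruct k as [|k']; [simpl; rewrite Rmult_0_l, Rinv_0; lra|
  apply Rlt_le, Rinv_0_lt_compat, pow_lt, lt_0_INR; lia].
  pose proof (sum_h4 (maxabs L)). assert (0 < / (9 * (INR (maxabs L + 2) + /2))).
  apply Rinv_0_lt_compat. pose proof (pos_INR (maxabs L + 2)). lra. lra.
Qed.

Lemma sum_shift (g : Z -> R) (B : R) m : (forall L, NoDup L -> lsumR g L <= B) ->
  forall L, NoDup L -> lsumR (fun x => g (x + m)%Z) L <= B.
Proof.
  intros H L N. rewrite <- (lsumR_map g (fun x => (x + m)%Z)). apply H.
  apply NoDup_map_inj; auto; intros; lia.
Qed.
Lemma sum_neg (g : Z -> R) (B : R) : (forall L, NoDup L -> lsumR g L <= B) ->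
  forall L, NoDup L -> lsumR (fun x => g (- x)%Z) L <= B.
Proof.
  intros H L N. rewrite <- (lsumR_map g (fun x => (- x)%Z)). apply H.
  apply NoDup_map_inj; auto; intros; lia.
Qed.
Lemma inv4_sq x : inv4 x = inv2 x * inv2 x.
Proof. unfold inv4, inv2. destruct (x =? 0)%Z eqn:E; [ring|]. apply Z.eqb_neq in E.
  assert (IZR x <> 0) by (apply not_0_IZR; auto). field; auto. Qed.

Lemma sum_Q m L : NoDup L -> lsumR (fun x => inv2 x * inv2 (x + m)%Z) L <= Qb.
Proof.
  intros N. apply Rle_trans with (lsumR (fun x => / 2 * inv4 x + / 2 * inv4 (x + m)%Z) L).
  - apply lsumR_le; intros x _. rewrite !inv4_sq. pose proof (inv2_nonneg x). pose proof (pow2_ge_0 (inv2 x - inv2 (x+m)%Z)). nra.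
  - rewrite lsumR_plus, !lsumR_scal. pose proof (sum_inv4 L N). pose proof (sum_shift inv4 Qb m sum_inv4 L N). lra.
Qed.

Lemma PI_lb : 304 / 100 <= PI.
Proof.
  destruct (PI_ineq 4) as [H _]. unfold tg_alt, PI_tg in H. simpl sum_f_R0 in H.
  simpl Nat.mul in H. simpl Nat.add in H. rewrite ?S_INR in H. simpl INR in H. 
  match type of H with ?a <= _ => replace a with (11064338/14549535) in H by field end.
  lra.
Qed.
Lemma inv2_opp x : inv2 (- x) = inv2 x.
Proof. unfold inv2. rewrite opp_IZR. destruct (x =? 0)%Z eqn:E; destruct (- x =? 0)%Z eqn:E2; 
  try (apply Z.eqb_eq in E; apply Z.eqb_neq in E2; lia); try (apply Z.eqb_eq in E2; apply Z.eqb_neq in E; lia); auto.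
  f_equal; ring. Qed.

Lemma sum_inv2_shift c L : NoDup L -> lsumR (fun x => inv2 (x + c)) L <= Sb.
Proof. apply sum_shift, sum_inv2. Qed.
Lemma sum_inv2_rev c L : NoDup L -> lsumR (fun x => inv2 (c - x)) L <= Sb.
Proof. intros N. rewrite (lsumR_ext _ (fun x => inv2 (x + - c))). apply sum_inv2_shift; auto.
  intros x _. rewrite <- inv2_opp. f_equal; lia. Qed.
Lemma sum_Q_rev c L : NoDup L -> lsumR (fun x => inv2 x * inv2 (c - x)) L <= Qb.
Proof. intros N. rewrite (lsumR_ext _ (fun x => inv2 x * inv2 (x + - c))). apply sum_Q; auto.
  intros x _. rewrite <- (inv2_opp (x + - c)). do 2 f_equal; lia. Qed.

Definition Zp_eq_dec : forall x y : Z * Z, {x = y} + {x <> y}.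
Proof. decide equality; apply Z.eq_dec. Defined.

Lemma lsumR_swap (G : Z * Z -> R) F : lsumR G F = lsumR (fun q => G (snd q, fst q)) (map (fun q : Z * Z => (snd q, fst q)) F).
Proof. rewrite lsumR_map. apply lsumR_ext. intros [? ?] _; auto. Qed.

Definition KB (n : nat) (k : Z) (p : Z * Z) : R :=
  let k1 := fst p in let k2 := snd p in
  (inv2 k1 * inv2 (k1 + k2) * inv2 (k - k2) + 2 * (inv2 k1 * inv2 (k - k1) * inv2 (k - k2))
   + 2 * (inv2 k1 * inv2 (k1 + k2) * inv2 (k - k1))) / (4 * (INR n + 1) ^ 2).

Definition Mb (n : nat) : R := 5 * Sb * Qb / (4 * (INR n + 1) ^ 2).

Lemma KB_sum n k F : NoDup F -> lsumR (KB n k) F <= Mb n.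
Proof.
  intros NF. unfold KB, Mb.
  assert (HN : 0 < 4 * (INR n + 1) ^ 2) by (pose proof (pos_INR n); nra).
  rewrite (lsumR_ext _ (fun p => / (4 * (INR n + 1) ^ 2) * (inv2 (fst p) * inv2 (fst p + snd p) * inv2 (k - snd p) + 2 * (inv2 (fst p) * inv2 (k - fst p) * inv2 (k - snd p))
   + 2 * (inv2 (fst p) * inv2 (fst p + snd p) * inv2 (k - fst p))))) by (intros; unfold Rdiv; ring).
  rewrite lsumR_scal, !lsumR_plus, !lsumR_scal.
  assert (A1 : lsumR (fun p => inv2 (fst p) * inv2 (fst p + snd p) * inv2 (k - snd p)) F <= Qb * Sb).
  { rewrite (lsumR_swap _ F).
    eapply Rle_trans.
    apply (fubini Z.eq_dec _ (fun y => inv2 (k - y)) (fun q => inv2 (snd q) * inv2 (snd q + fst q)) Qb).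
    - intros; apply inv2_nonneg.
    - intros; apply Rmult_le_pos; apply inv2_nonneg.
    - intros x L NL. simpl. apply sum_Q; auto.
    - apply NoDup_map_inj; auto. intros [? ?] [? ?] E; inversion E; auto.
    - intros [q1 q2] _; simpl. lra.
    - apply Rmult_le_compat_l. unfold Qb; lra. apply sum_inv2_rev, NoDup_nodup. }
  assert (A2 : lsumR (fun p => inv2 (fst p) * inv2 (k - fst p) * inv2 (k - snd p)) F <= Sb * Qb).
  { eapply Rle_trans.
    apply (fubini Z.eq_dec _ (fun x => inv2 x * inv2 (k - x)) (fun q => inv2 (k - snd q)) Sb); auto.
    - intros; apply Rmult_le_pos; apply inv2_nonneg.
    - intros; apply inv2_nonneg.
    - intros x L NL. simpl. apply sum_inv2_rev; auto.
    - intros [q1 q2] _; simpl. lra.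
    - apply Rmult_le_compat_l. unfold Sb; lra. apply sum_Q_rev, NoDup_nodup. }
  assert (A3 : lsumR (fun p => inv2 (fst p) * inv2 (fst p + snd p) * inv2 (k - fst p)) F <= Sb * Qb).
  { eapply Rle_trans.
    apply (fubini Z.eq_dec _ (fun x => inv2 x * inv2 (k - x)) (fun q => inv2 (fst q + snd q)) Sb); auto.
    - intros; apply Rmult_le_pos; apply inv2_nonneg.
    - intros; apply inv2_nonneg.
    - intros x L NL. simpl. rewrite (lsumR_ext _ (fun y => inv2 (y + x))) by (intros; f_equal; lia). apply sum_inv2_shift; auto.
    - intros [q1 q2] _; simpl. lra.
    - apply Rmult_le_compat_l. unfold Sb; lra. apply sum_Q_rev, NoDup_nodup. }
  replace (5 * Sb * Qb / (4 * (INR n + 1) ^ 2)) with (/ (4 * (INR n + 1) ^ 2) * (5 * Sb * Qb)) by (unfold Rdiv; ring).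
  apply Rmult_le_compat_l. apply Rlt_le, Rinv_0_lt_compat; auto. lra.
Qed.
Definition adm (n : nat) (k : Z) (p : Z * Z) : bool :=
  let k1 := fst p in let k2 := snd p in let k3 := (k - k1 - k2)%Z in
  negb (k1 =? 0)%Z && negb (k2 =? 0)%Z && negb (k3 =? 0)%Z &&
  negb ((k1 + k2) * (k - k1) * (k - k2) =? 0)%Z &&
  (Z.of_nat n <? Z.abs k2)%Z && (Z.of_nat n <? Z.abs k3)%Z.

Definition K1 (n : nat) (k : Z) (p : Z * Z) : R :=
  if adm n k p then / Rabs (IZR (fst p * (fst p + snd p) * (k - fst p) * (k - snd p))) else 0.

Lemma adm_true n k p : adm n k p = true ->
  fst p <> 0%Z /\ snd p <> 0%Z /\ (k - fst p - snd p <> 0)%Z /\ (fst p + snd p <> 0)%Z /\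
  (k - fst p <> 0)%Z /\ (k - snd p <> 0)%Z /\ (Z.of_nat n < Z.abs (snd p))%Z /\ (Z.of_nat n < Z.abs (k - fst p - snd p))%Z.
Proof.
  unfold adm. intros H. repeat (apply andb_prop in H; destruct H as [H ?]).
  repeat match goal with
  | H : negb _ = true |- _ => apply negb_true_iff in H
  | H : (_ =? _)%Z = false |- _ => apply Z.eqb_neq in H
  | H : (_ <? _)%Z = true |- _ => apply Z.ltb_lt in H
  end.
  repeat split; auto; intro E; rewrite E in *; lia.
Qed.

Lemma KB_nonneg n k p : 0 <= KB n k p.
Proof.
  unfold KB. pose proof (pos_INR n). apply Rmult_le_pos; [|apply Rlt_le, Rinv_0_lt_compat; nra].
  pose proof (inv2_nonneg (fst p)). pose proof (inv2_nonneg (fst p + snd p)). pose proof (inv2_nonneg (k - fst p)). pose proof (inv2_nonneg (k - snd p)).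
  repeat apply Rplus_le_le_0_compat; repeat apply Rmult_le_pos; lra.
Qed.

Lemma K1_nonneg n k p : 0 <= K1 n k p.
Proof. unfold K1. destruct (adm n k p) eqn:E; [|lra]. apply adm_true in E.
  apply Rlt_le, Rinv_0_lt_compat, Rabs_pos_lt, not_0_IZR.
  destruct E as (?&?&?&?&?&?&?&?). intro E.
  apply Z.mul_eq_0 in E; destruct E as [E|E]; [|lia].
  apply Z.mul_eq_0 in E; destruct E as [E|E]; [|lia].
  apply Z.mul_eq_0 in E; destruct E as [E|E]; lia.
Qed.

Lemma Zkey n k1 k2 k : (Z.of_nat n < Z.abs k2)%Z -> (Z.of_nat n < Z.abs (k - k1 - k2))%Z ->
  (4 * (Z.of_nat n + 1) * (Z.of_nat n + 1) <= (k - k1) * (k - k1) + 2 * ((k1 + k2) * (k1 + k2)) + 2 * ((k - k2) * (k - k2)))%Z.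
Proof.
  Local Open Scope Z_scope.
  intros H2 H3. set (m := Z.of_nat n) in *. set (k3 := k - k1 - k2) in *.
  assert (E1 : (m + 1) * (m + 1) <= k2 * k2).
  { assert (0 <= m) by (unfold m; lia). assert (m + 1 <= Z.abs k2) by lia.
    rewrite <- (Z.abs_square k2). apply Z.mul_le_mono_nonneg; lia. }
  assert (E2 : (m + 1) * (m + 1) <= k3 * k3).
  { assert (0 <= m) by (unfold m; lia). assert (m + 1 <= Z.abs k3) by lia.
    rewrite <- (Z.abs_square k3). apply Z.mul_le_mono_nonneg; lia. }
  assert (E3 : (k - k1) * (k - k1) + 2 * ((k1 + k2) * (k1 + k2)) + 2 * ((k - k2) * (k - k2)) = 2 * (k2 * k2) + 2 * (k3 * k3) + (k1 + k2 + (k - k2)) * (k1 + k2 + (k - k2))) by (unfold k3; ring).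
  rewrite E3. assert (0 <= (k1 + k2 + (k - k2)) * (k1 + k2 + (k - k2))) by apply Z.square_nonneg.
  lia.
Qed.
Local Open Scope R_scope.

Lemma K1_sq n k p : K1 n k p ^ 2 <= KB n k p.
Proof.
  unfold K1. destruct (adm n k p) eqn:E; [|simpl; rewrite Rmult_0_l; apply KB_nonneg].
  apply adm_true in E. destruct p as [k1 k2]; simpl in *.
  destruct E as (H1&H2&H3&Ha&Hb&Hc&Hn2&Hn3).
  pose proof (Zkey n k1 k2 k Hn2 Hn3) as Z4.
  apply IZR_le in Z4. rewrite !plus_IZR, !mult_IZR, !plus_IZR, !minus_IZR in Z4.
  rewrite <- INR_IZR_INZ in Z4.
  unfold KB, inv2; simpl.
  destruct (k1 =? 0)%Z eqn:e1; [apply Z.eqb_eq in e1; lia|].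
  destruct (k1 + k2 =? 0)%Z eqn:e2; [apply Z.eqb_eq in e2; lia|].
  destruct (k - k1 =? 0)%Z eqn:e3; [apply Z.eqb_eq in e3; lia|].
  destruct (k - k2 =? 0)%Z eqn:e4; [apply Z.eqb_eq in e4; lia|].
  rewrite !mult_IZR. rewrite !minus_IZR, !plus_IZR.
  set (X := IZR k1) in *. set (Y := IZR k2) in *. set (K := IZR k) in *.
  assert (X <> 0) by (apply not_0_IZR; auto).
  assert (X + Y <> 0) by (unfold X, Y; rewrite <- plus_IZR; apply not_0_IZR; auto).
  assert (K - X <> 0) by (unfold K, X; rewrite <- minus_IZR; apply not_0_IZR; auto).
  assert (K - Y <> 0) by (unfold K, Y; rewrite <- minus_IZR; apply not_0_IZR; auto).
  set (N := INR n + 1) in *.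
  assert (0 < N) by (unfold N; pose proof (pos_INR n); lra).
  set (P := X * (X + Y) * (K - X) * (K - Y)).
  assert (HP : P <> 0) by (unfold P; repeat apply Rmult_integral_contrapositive_currified; auto).
  assert (EL : / Rabs P * (/ Rabs P * 1) = (/ P) ^ 2).
  { rewrite <- Rabs_inv, Rmult_1_r, <- Rabs_mult. simpl. rewrite Rmult_1_r. apply Rabs_pos_eq, Rle_0_sqr. }
  rewrite EL.
  set (F := ((K - X) * (K - X) + 2 * ((X + Y) * (X + Y)) + 2 * ((K - Y) * (K - Y))) / (4 * N ^ 2)).
  match goal with |- _ <= ?r => replace r with (F * (/ P) ^ 2) end.
  2:{ unfold F, P. field. repeat split; auto. lra. }
  assert (1 <= F).
  { unfold F. apply (Rmult_le_reg_r (4 * N ^ 2)). nra. unfold Rdiv. rewrite Rmult_assoc, Rinv_l by nra.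
    rewrite Rmult_1_l, Rmult_1_r. lra. }
  assert (0 <= (/ P) ^ 2) by apply pow2_ge_0.
  rewrite <- (Rmult_1_l ((/ P) ^ 2)) at 1. apply Rmult_le_compat_r; auto.
Qed.
Lemma Rpower_ge_base t s : 0 < t <= 1 -> 0 < s <= 1 -> t <= Rpower t s.
Proof.
  intros [Ht1 Ht2] [Hs1 Hs2]. rewrite <- (Rpower_1 t) at 1 by auto. unfold Rpower.
  assert (ln t <= 0) by (rewrite <- ln_1; apply ln_le; lra).
  assert (1 * ln t <= s * ln t) by nra.
  destruct (Rle_lt_or_eq_dec _ _ H0) as [H1|H1]; [apply Rlt_le, exp_increasing; auto| rewrite H1; lra].
Qed.

Lemma Rpower_pos x y : 0 < Rpower x y.
Proof. unfold Rpower; apply exp_pos. Qed.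

Lemma Rpower_sub a b s : 0 < a -> 0 < b -> 0 < s <= 1 -> Rpower (a + b) s <= Rpower a s + Rpower b s.
Proof.
  intros Ha Hb Hs.
  assert (Ea : Rpower a s = Rpower (a + b) s * Rpower (a / (a + b)) s).
  { rewrite Rpower_mult_distr by (try apply Rdiv_lt_0_compat; lra). f_equal; field; lra. }
  assert (Eb : Rpower b s = Rpower (a + b) s * Rpower (b / (a + b)) s).
  { rewrite Rpower_mult_distr by (try apply Rdiv_lt_0_compat; lra). f_equal; field; lra. }
  assert (a / (a + b) <= Rpower (a / (a + b)) s).
  { apply Rpower_ge_base; auto. split. apply Rdiv_lt_0_compat; lra. apply Rmult_le_reg_r with (a + b); [lra|]. 
    unfold Rdiv; rewrite Rmult_assoc, Rinv_l by lra; lra. }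
  assert (b / (a + b) <= Rpower (b / (a + b)) s).
  { apply Rpower_ge_base; auto. split. apply Rdiv_lt_0_compat; lra. apply Rmult_le_reg_r with (a + b); [lra|]. 
    unfold Rdiv; rewrite Rmult_assoc, Rinv_l by lra; lra. }
  pose proof (Rpower_pos (a + b) s).
  rewrite Ea, Eb. replace (Rpower (a + b) s) with (Rpower (a + b) s * (a / (a + b) + b / (a + b))) at 1 by (field; lra).
  nra.
Qed.

Definition zabs (k : Z) : R := IZR (Z.abs k).

Lemma zabs_pos k : k <> 0%Z -> 0 < zabs k.
Proof. intros; unfold zabs; apply IZR_lt; lia. Qed.
Lemma zabs_ge1 k : k <> 0%Z -> 1 <= zabs k.
Proof. intros; unfold zabs; apply IZR_le; lia. Qed.

Lemma weight_sub k1 k2 k3 s : k1 <> 0%Z -> k2 <> 0%Z -> k3 <> 0%Z -> (k1 + k2 + k3 <> 0)%Z -> 0 < s <= 1 ->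
  Rpower (zabs (k1 + k2 + k3)) s <= Rpower (zabs k1) s + Rpower (zabs k2) s + Rpower (zabs k3) s.
Proof.
  intros H1 H2 H3 H Hs.
  apply Rle_trans with (Rpower (zabs k1 + zabs k2 + zabs k3) s).
  - apply Rle_Rpower_l; [lra|]. split. apply zabs_pos; auto. unfold zabs; rewrite <- !plus_IZR; apply IZR_le; lia.
  - pose proof (zabs_pos _ H1). pose proof (zabs_pos _ H2). pose proof (zabs_pos _ H3).
    eapply Rle_trans. apply Rpower_sub; auto; lra.
    pose proof (Rpower_sub (zabs k1) (zabs k2) s). lra.
Qed.

Lemma Cmod_cexpi th : Cmod (cexpi th) = 1.
Proof. unfold Cmod, cexpi; cbn [fst snd].
  replace (cos th ^ 2 + sin th ^ 2) with 1 by (rewrite <- (sin2_cos2 th); unfold Rsqr; ring). apply sqrt_1. Qed.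

Lemma Pi_neg_small n v j : (Z.abs j <= Z.of_nat n)%Z -> Pi_neg n v j = RtoC 0.
Proof. intros H; unfold Pi_neg. apply Z.leb_le in H. rewrite H; auto. Qed.
Lemma Cmod_Pi n v j : Cmod (Pi_neg n v j) <= Cmod (v j).
Proof. unfold Pi_neg. destruct (Z.abs j <=? Z.of_nat n)%Z; [|lra]. rewrite Cmod_0. apply Cmod_ge_0. Qed.

Lemma term_bound n t u v w k p :
  Cmod (B30_term n t u v w k p) <= K1 n k p * (Cmod (u (fst p)) * Cmod (v (snd p)) * Cmod (w (k - fst p - snd p)%Z)).
Proof.
  destruct p as [k1 k2]. unfold B30_term. cbn [fst snd].
  assert (R0 : 0 <= K1 n k (k1, k2) * (Cmod (u k1) * Cmod (v k2) * Cmod (w (k - k1 - k2)%Z))).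
  { apply Rmult_le_pos. apply K1_nonneg. repeat apply Rmult_le_pos; apply Cmod_ge_0. }
  set (k3 := (k - k1 - k2)%Z) in *.
  destruct ((k1 =? 0) || (k2 =? 0) || (k3 =? 0) || ((k1 + k2) * (k2 + k3) * (k3 + k1) =? 0))%Z eqn:E.
  { rewrite Cmod_0; auto. }
  repeat rewrite orb_false_iff in E. destruct E as [[[E1 E2] E3] E4].
  apply Z.eqb_neq in E1, E2, E3, E4.
  destruct (Z_le_dec (Z.abs k2) (Z.of_nat n)) as [S2|S2].
  { rewrite (Pi_neg_small n v k2 S2), Cmult_0_r, Cmult_0_l, Cmod_0; auto. }
  destruct (Z_le_dec (Z.abs k3) (Z.of_nat n)) as [S3|S3].
  { rewrite (Pi_neg_small n w k3 S3), Cmult_0_r, Cmod_0; auto. }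
  assert (HA : adm n k (k1, k2) = true).
  { unfold adm; cbn [fst snd]. fold k3.
    apply Z.eqb_neq in E1, E2, E3.
    rewrite E1, E2, E3. simpl.
    assert ((k1 + k2) * (k - k1) * (k - k2) <> 0)%Z by (replace ((k1 + k2) * (k - k1) * (k - k2))%Z with ((k1 + k2) * (k2 + k3) * (k3 + k1))%Z by (unfold k3; ring); auto).
    apply Z.eqb_neq in H. rewrite H. simpl.
    assert (Z.of_nat n <? Z.abs k2 = true)%Z by (apply Z.ltb_lt; lia).
    assert (Z.of_nat n <? Z.abs k3 = true)%Z by (apply Z.ltb_lt; lia).
    rewrite H0, H1; auto. }
  unfold K1. rewrite HA. cbn [fst snd].
  replace (k1 * (k1 + k2) * (k - k1) * (k - k2))%Z with (k1 * (k1 + k2) * (k2 + k3) * (k3 + k1))%Z by (unfold k3; ring).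
  set (D := (k1 * (k1 + k2) * (k2 + k3) * (k3 + k1))%Z).
  assert (HD : IZR D <> 0).
  { apply not_0_IZR. unfold D. intro E. apply Z.mul_eq_0 in E; destruct E as [E|E]; [|apply E4; rewrite E; ring].
    apply Z.mul_eq_0 in E; destruct E as [E|E]; [|apply E4; rewrite E; ring].
    apply Z.mul_eq_0 in E; destruct E as [E|E]; [lia|apply E4; rewrite E; ring]. }
  rewrite !Cmod_mult, Cmod_div, Cmod_cexpi, Cmod_R.
  2:{ intro E. apply HD. injection E; auto. }
  pose proof (Cmod_Pi n v k2). pose proof (Cmod_Pi n w k3).
  pose proof (Cmod_ge_0 (u k1)). pose proof (Cmod_ge_0 (Pi_neg n v k2)). pose proof (Cmod_ge_0 (Pi_neg n w k3)).
  assert (0 <= 1 / Rabs (IZR D)) by (apply Rlt_le, Rdiv_lt_0_compat; [lra|apply Rabs_pos_lt; auto]).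
  unfold Rdiv in *. rewrite Rmult_1_l in *.
  rewrite !Rmult_assoc. apply Rmult_le_compat_l; auto.
  apply Rmult_le_compat_l; auto. apply Rmult_le_compat; auto.
Qed.
Lemma sup_sum {I : Type} (g : I -> R) (B : R) :
  (forall x, 0 <= g x) -> (forall F, NoDup F -> lsumR g F <= B) ->
  exists L, forall eps, 0 < eps -> exists A0 : list I, forall A, NoDup A -> incl A0 A -> Rabs (lsumR g A - L) < eps.
Proof.
  intros Hg HB.
  set (E := fun x => exists F, NoDup F /\ x = lsumR g F).
  assert (Hb : bound E) by (exists B; intros x [F [NF ->]]; auto).
  assert (He : exists x, E x) by (exists 0; exists nil; split; [constructor|reflexivity]).
  destruct (completeness E Hb He) as [m [Hub Hl]].
  exists m. intros eps Heps.
  destruct (classic (exists F, NoDup F /\ m - eps < lsumR g F)) as [[F [NF HF]]|Hn].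
  - exists F. intros A NA Hi.
    assert (lsumR g F <= lsumR g A) by (apply lsumR_incl; auto).
    assert (lsumR g A <= m) by (apply Hub; exists A; auto).
    apply Rabs_def1; lra.
  - exfalso. assert (m <= m - eps); [|lra].
    apply Hl. intros x [F [NF ->]]. apply Rnot_lt_le. intro H. apply Hn. exists F; auto.
Qed.

Lemma signed_sum {I : Type} (h : I -> R) (B : R) :
  (forall F, NoDup F -> lsumR (fun x => Rabs (h x)) F <= B) ->
  exists L, forall eps, 0 < eps -> exists A0 : list I, forall A, NoDup A -> incl A0 A -> Rabs (lsumR h A - L) < eps.
Proof.
  intros HB.
  destruct (sup_sum (fun x => Rmax (h x) 0) B) as [L1 H1].
  { intros; apply Rmax_r. }
  { intros F NF. eapply Rle_trans; [|apply (HB F NF)]. apply lsumR_le; intros.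
    unfold Rmax; destruct (Rle_dec (h x) 0); [apply Rabs_pos|apply RRle_abs]. }
  destruct (sup_sum (fun x => Rmax (- h x) 0) B) as [L2 H2].
  { intros; apply Rmax_r. }
  { intros F NF. eapply Rle_trans; [|apply (HB F NF)]. apply lsumR_le; intros.
    unfold Rmax; destruct (Rle_dec (- h x) 0); [apply Rabs_pos|]. rewrite <- Rabs_Ropp. apply RRle_abs. }
  exists (L1 - L2). intros eps He.
  destruct (H1 (eps/2)) as [A1 HA1]; [lra|]. destruct (H2 (eps/2)) as [A2 HA2]; [lra|].
  exists (A1 ++ A2). intros A NA Hi.
  assert (Hi1 : incl A1 A) by (intros x Hx; apply Hi, in_or_app; auto).
  assert (Hi2 : incl A2 A) by (intros x Hx; apply Hi, in_or_app; auto).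
  specialize (HA1 A NA Hi1). specialize (HA2 A NA Hi2).
  rewrite (lsumR_ext h (fun x => Rmax (h x) 0 + - Rmax (- h x) 0)).
  2:{ intros x _. unfold Rmax. destruct (Rle_dec (h x) 0); destruct (Rle_dec (- h x) 0); lra. }
  rewrite lsumR_plus, lsumR_opp.
  apply Rabs_def2 in HA1. apply Rabs_def2 in HA2. apply Rabs_def1; lra.
Qed.

Lemma abs_fst_le (z : C) : Rabs (fst z) <= Cmod z.
Proof. destruct z as [x y]; unfold Cmod; cbn [fst snd]. rewrite <- sqrt_Rsqr_abs. apply sqrt_le_1_alt. unfold Rsqr; simpl. pose proof (pow2_ge_0 y). lra. Qed.
Lemma abs_snd_le (z : C) : Rabs (snd z) <= Cmod z.
Proof. destruct z as [x y]; unfold Cmod; cbn [fst snd]. rewrite <- sqrt_Rsqr_abs. apply sqrt_le_1_alt. unfold Rsqr; simpl. pose proof (pow2_ge_0 x). lra. Qed.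
Lemma Cmod_le_sum (x y : R) : Cmod (x, y) <= Rabs x + Rabs y.
Proof.
  unfold Cmod; cbn [fst snd]. rewrite <- (sqrt_Rsqr (Rabs x + Rabs y)) by (pose proof (Rabs_pos x); pose proof (Rabs_pos y); lra).
  apply sqrt_le_1_alt. unfold Rsqr. rewrite <- (pow2_abs x), <- (pow2_abs y).
  pose proof (Rabs_pos x); pose proof (Rabs_pos y). nra.
Qed.

Lemma exists_HasSum2 (f : Z * Z -> C) (B : R) :
  (forall F, NoDup F -> lsumR (fun p => Cmod (f p)) F <= B) -> exists S, HasSum2 f S.
Proof.
  intros HB.
  destruct (signed_sum (fun p => fst (f p)) B) as [L1 H1].
  { intros F NF. eapply Rle_trans; [|apply (HB F NF)]. apply lsumR_le; intros; apply abs_fst_le. }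
  destruct (signed_sum (fun p => snd (f p)) B) as [L2 H2].
  { intros F NF. eapply Rle_trans; [|apply (HB F NF)]. apply lsumR_le; intros; apply abs_snd_le. }
  exists (L1, L2). intros eps He.
  destruct (H1 (eps/2)) as [A1 HA1]; [lra|]. destruct (H2 (eps/2)) as [A2 HA2]; [lra|].
  exists (A1 ++ A2). intros A NA Hi.
  assert (Hi1 : incl A1 A) by (intros x Hx; apply Hi, in_or_app; auto).
  assert (Hi2 : incl A2 A) by (intros x Hx; apply Hi, in_or_app; auto).
  specialize (HA1 A NA Hi1). specialize (HA2 A NA Hi2).
  rewrite <- lsum_fst in HA1. rewrite <- lsum_snd in HA2.
  destruct (lsum f A) as [a1 a2]. cbn [fst snd] in *.
  unfold Cminus, Cplus, Copp; cbn [fst snd].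
  eapply Rle_lt_trans. apply Cmod_le_sum. unfold Rminus in *. lra.
Qed.

Lemma lsum_Cmod (f : Z * Z -> C) A : Cmod (lsum f A) <= lsumR (fun p => Cmod (f p)) A.
Proof.
  induction A; unfold lsum, lsumR in *; simpl. rewrite Cmod_0; lra.
  eapply Rle_trans. apply Cmod_triangle. lra.
Qed.

Lemma HasSum2_bound (f : Z * Z -> C) S : HasSum2 f S ->
  forall eps, 0 < eps -> exists F, NoDup F /\ Cmod S <= lsumR (fun p => Cmod (f p)) F + eps.
Proof.
  intros H eps He. destruct (H eps He) as [A0 HA].
  exists (nodup Zp_eq_dec A0). split. apply NoDup_nodup.
  specialize (HA (nodup Zp_eq_dec A0) (NoDup_nodup _ _)).
  assert (incl A0 (nodup Zp_eq_dec A0)) by (intros x Hx; apply nodup_In; auto).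
  specialize (HA H0).
  pose proof (lsum_Cmod f (nodup Zp_eq_dec A0)).
  set (z := lsum f (nodup Zp_eq_dec A0)) in *.
  assert (Cmod S <= Cmod z + Cmod (Cminus z S)).
  { replace S with (Cplus z (Copp (Cminus z S))) at 1.
    eapply Rle_trans. apply Cmod_triangle. rewrite Cmod_opp. lra.
    destruct z, S; unfold Cminus, Cplus, Copp; cbn [fst snd]; f_equal; ring. }
  lra.
Qed.

Lemma Sum2_spec (f : Z * Z -> C) (B : R) :
  (forall F, NoDup F -> lsumR (fun p => Cmod (f p)) F <= B) -> HasSum2 f (Sum2 f).
Proof.
  intros HB. unfold Sum2. apply epsilon_spec. apply exists_HasSum2 with B; auto.
Qed.
Definition hsE (s : R) (v : seqC) : R -> Prop := fun x => exists A : list Z, NoDup A /\ (forall k, In k A -> k <> 0%Z) /\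
     x = lsumR (fun k => Rpower (IZR (Z.abs k)) (2 * s) * (Cmod (v k))^2) A.

Lemma hsnorm2_lub s v : is_lub_Rbar (hsE s v) (hsnorm2 s v).
Proof. apply Lub_Rbar_correct. Qed.

Lemma hs_le s v B : (forall A, NoDup A -> (forall k, In k A -> k <> 0%Z) ->
   lsumR (fun k => Rpower (IZR (Z.abs k)) (2 * s) * (Cmod (v k))^2) A <= B) ->
  in_Hdot s v /\ real (hsnorm2 s v) <= B /\ 0 <= real (hsnorm2 s v).
Proof.
  intros H. destruct (hsnorm2_lub s v) as [Hub Hl].
  assert (H0 : Rbar_le 0 (hsnorm2 s v)).
  { apply Hub. exists nil. split; [constructor|]. split; [intros k []|reflexivity]. }
  assert (H1 : Rbar_le (hsnorm2 s v) B).
  { apply Hl. intros x [A [NA [HA ->]]]. simpl. apply H; auto. }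
  unfold in_Hdot. destruct (hsnorm2 s v) as [r| |]; simpl in *; try contradiction.
  split; [reflexivity|]; lra.
Qed.

Lemma hs_ub s v : in_Hdot s v -> forall A, NoDup A -> (forall k, In k A -> k <> 0%Z) ->
   lsumR (fun k => Rpower (IZR (Z.abs k)) (2 * s) * (Cmod (v k))^2) A <= real (hsnorm2 s v).
Proof.
  intros Hf A NA HA. destruct (hsnorm2_lub s v) as [Hub _].
  assert (Rbar_le (lsumR (fun k => Rpower (IZR (Z.abs k)) (2 * s) * (Cmod (v k))^2) A) (hsnorm2 s v)).
  { apply Hub. exists A; auto. }
  unfold in_Hdot, is_finite in Hf. rewrite <- Hf in H. simpl in H. auto.
Qed.

Definition wz (s : R) (v : seqC) (k : Z) : R :=
  if (k =? 0)%Z then 0 else Rpower (IZR (Z.abs k)) (2 * s) * (Cmod (v k))^2.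

Lemma wz_nonneg s v k : 0 <= wz s v k.
Proof. unfold wz. destruct (k =? 0)%Z; [lra|]. apply Rmult_le_pos. apply Rlt_le, Rpower_pos. apply pow2_ge_0. Qed.

Lemma wz_sum s v : in_Hdot s v -> forall A, NoDup A -> lsumR (wz s v) A <= real (hsnorm2 s v).
Proof.
  intros Hf A NA. rewrite (lsumR_filter_zero (fun x => negb (x =? 0)%Z)).
  2:{ intros x Hx; unfold wz. destruct (x =? 0)%Z; auto; discriminate. }
  rewrite (lsumR_ext _ (fun k => Rpower (IZR (Z.abs k)) (2 * s) * (Cmod (v k))^2)).
  apply hs_ub; auto. apply NoDup_filter; auto.
  intros k Hk; apply filter_In in Hk; destruct Hk as [_ Hk]. destruct (k =? 0)%Z eqn:E; [discriminate|]. apply Z.eqb_neq; auto.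
  intros k Hk; apply filter_In in Hk; destruct Hk as [_ Hk]. unfold wz. destruct (k =? 0)%Z; [discriminate|auto].
Qed.

Lemma wz0_eq v k : k <> 0%Z -> wz 0 v k = (Cmod (v k))^2.
Proof. intros H. unfold wz. apply Z.eqb_neq in H. rewrite H. rewrite Rmult_0_r, Rpower_O. ring. apply IZR_lt. apply Z.eqb_neq in H. lia. Qed.

Lemma in_Hdot_0 s v : 0 < s -> in_Hdot s v -> in_Hdot 0 v /\ real (hsnorm2 0 v) <= real (hsnorm2 s v) /\ 0 <= real (hsnorm2 0 v).
Proof.
  intros Hs Hf. apply hs_le. intros A NA HA. eapply Rle_trans; [|apply (hs_ub s v Hf A NA HA)].
  apply lsumR_le. intros k Hk. rewrite Rmult_0_r, Rpower_O by (apply IZR_lt; specialize (HA k Hk); lia).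
  rewrite Rmult_1_l. rewrite <- (Rmult_1_l (Cmod (v k) ^ 2)) at 1. apply Rmult_le_compat_r. apply pow2_ge_0.
  rewrite <- (Rpower_O (IZR (Z.abs k))) by (apply IZR_lt; specialize (HA k Hk); lia).
  apply Rle_Rpower. apply IZR_le. specialize (HA k Hk); lia. lra.
Qed.

Lemma trip (a b c : Z -> R) (A B C : R) :
  (forall x, 0 <= a x) -> (forall x, 0 <= b x) -> (forall x, 0 <= c x) ->
  (forall L, NoDup L -> lsumR a L <= A) -> (forall L, NoDup L -> lsumR b L <= B) -> (forall L, NoDup L -> lsumR c L <= C) ->
  forall T : list (Z * (Z * Z)), NoDup T ->
  lsumR (fun q => a (fst (snd q)) * b (snd (snd q)) * c (fst q - fst (snd q) - snd (snd q))%Z) T <= A * B * C.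
Proof.
  intros Ha Hb Hc HA HB HC T NT.
  set (phi := fun q : Z * (Z * Z) => (fst (snd q), (snd (snd q), (fst q - fst (snd q) - snd (snd q))%Z))).
  match goal with |- ?l <= _ => replace l with (lsumR (fun r : Z * (Z * Z) => a (fst r) * (b (fst (snd r)) * c (snd (snd r)))) (map phi T)) end.
  2:{ rewrite lsumR_map. apply lsumR_ext. intros; simpl; ring. }
  assert (NP : NoDup (map phi T)).
  { apply NoDup_map_inj; auto. intros [x [y z]] [x' [y' z']] E. unfold phi in E; simpl in E.
    injection E; intros E1 E2 E3. assert (x = x') by lia. assert (y = y') by lia. assert (z = z') by lia. subst; reflexivity. }
  eapply Rle_trans.
  { apply (fubini Z.eq_dec (fun r => a (fst r) * (b (fst (snd r)) * c (snd (snd r)))) a (fun r => b (fst (snd r)) * c (snd (snd r))) (B * C) (map phi T)).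
    - exact Ha.
    - intros; apply Rmult_le_pos; auto.
    - intros x L NL. simpl. eapply Rle_trans.
      { apply (fubini Z.eq_dec (fun y => b (fst y) * c (snd y)) b (fun r => c (snd r)) C L).
        + exact Hb. + intros; apply Hc. + intros y L' NL'; simpl; apply HC; auto. + exact NL. + intros; simpl; lra. }
      assert (0 <= C) by (specialize (HC nil (NoDup_nil _)); unfold lsumR in HC; simpl in HC; lra).
      rewrite (Rmult_comm B C). apply Rmult_le_compat_l; auto. apply HB, NoDup_nodup.
    - exact NP.
    - intros; simpl; lra. }
  assert (0 <= B) by (specialize (HB nil (NoDup_nil _)); unfold lsumR in HB; simpl in HB; lra).
  assert (0 <= C) by (specialize (HC nil (NoDup_nil _)); unfold lsumR in HC; simpl in HC; lra).
  pose proof (HA _ (NoDup_nodup Z.eq_dec (map fst (map phi T)))). assert (0 <= B * C) by nra.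
  replace (A * B * C) with ((B * C) * A) by ring. apply Rmult_le_compat_l; auto.
Qed.
Definition x0 (v : seqC) (k : Z) : R := if (k =? 0)%Z then 0 else Cmod (v k).
Definition z0 (s : R) (v : seqC) (k : Z) : R := if (k =? 0)%Z then 0 else Rpower (zabs k) s * Cmod (v k).

Lemma x0_nonneg v k : 0 <= x0 v k.
Proof. unfold x0; destruct (k =? 0)%Z; [lra|apply Cmod_ge_0]. Qed.
Lemma z0_nonneg s v k : 0 <= z0 s v k.
Proof. unfold z0; destruct (k =? 0)%Z; [lra|]. apply Rmult_le_pos; [apply Rlt_le, Rpower_pos|apply Cmod_ge_0]. Qed.

Lemma x0_sq v k : x0 v k ^ 2 = wz 0 v k.
Proof. unfold x0. destruct (k =? 0)%Z eqn:E. unfold wz; rewrite E; ring. rewrite wz0_eq; auto. apply Z.eqb_neq; auto. Qed.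
Lemma Rpower_sq x s : Rpower x s ^ 2 = Rpower x (2 * s).
Proof. simpl. rewrite Rmult_1_r, <- Rpower_plus. f_equal; ring. Qed.
Lemma z0_sq s v k : z0 s v k ^ 2 = wz s v k.
Proof. unfold z0, wz. destruct (k =? 0)%Z eqn:E. ring. rewrite Rpow_mult_distr, Rpower_sq. reflexivity. Qed.

Lemma K1_adm n k p : K1 n k p <> 0 -> adm n k p = true.
Proof. unfold K1. destruct (adm n k p); auto. Qed.

Lemma term_bound0 n t v k p :
  Cmod (B30_term n t v v v k p) <= K1 n k p * (x0 v (fst p) * x0 v (snd p) * x0 v (k - fst p - snd p)%Z).
Proof.
  eapply Rle_trans. apply term_bound.
  destruct (Req_dec (K1 n k p) 0) as [E|E]. rewrite E, !Rmult_0_l; lra.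
  apply K1_adm, adm_true in E. destruct E as (H1&H2&H3&_).
  unfold x0. apply Z.eqb_neq in H1, H2, H3. rewrite H1, H2, H3. lra.
Qed.

Lemma term_weight s n t v k p : k <> 0%Z -> 0 < s <= 1 ->
  Rpower (zabs k) s * Cmod (B30_term n t v v v k p) <=
  K1 n k p * (z0 s v (fst p) * x0 v (snd p) * x0 v (k - fst p - snd p)%Z
            + x0 v (fst p) * z0 s v (snd p) * x0 v (k - fst p - snd p)%Z
            + x0 v (fst p) * x0 v (snd p) * z0 s v (k - fst p - snd p)%Z).
Proof.
  intros Hk Hs.
  pose proof (Rpower_pos (zabs k) s) as HR.
  eapply Rle_trans. apply Rmult_le_compat_l. lra. apply term_bound.
  destruct (Req_dec (K1 n k p) 0) as [E|E]. rewrite E, !Rmult_0_l, Rmult_0_r; lra.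
  apply K1_adm, adm_true in E. destruct E as (H1&H2&H3&_).
  pose proof (weight_sub (fst p) (snd p) (k - fst p - snd p) s H1 H2 H3) as W.
  replace (fst p + snd p + (k - fst p - snd p))%Z with k in W by ring.
  specialize (W Hk Hs).
  unfold x0, z0. apply Z.eqb_neq in H1, H2, H3. rewrite H1, H2, H3.
  pose proof (K1_nonneg n k p). 
  set (a := Cmod (v (fst p))). set (b := Cmod (v (snd p))). set (c := Cmod (v (k - fst p - snd p)%Z)).
  assert (0 <= a) by apply Cmod_ge_0. assert (0 <= b) by apply Cmod_ge_0. assert (0 <= c) by apply Cmod_ge_0.
  assert (0 <= a * b * c) by (repeat apply Rmult_le_pos; auto).
  pose proof (Cmod_Pi n v (snd p)). pose proof (Cmod_Pi n v (k - fst p - snd p)%Z).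
  assert (HH : Cmod (v (fst p)) * Cmod (Pi_neg n v (snd p)) * Cmod (Pi_neg n v (k - fst p - snd p)%Z) <= a * b * c).
  { apply Rmult_le_compat; [apply Rmult_le_pos; apply Cmod_ge_0 | apply Cmod_ge_0 | apply Rmult_le_compat_l; [apply Cmod_ge_0| exact H7] | exact H8]. }
  apply Rle_trans with (Rpower (zabs k) s * (K1 n k p * (a * b * c))).
  { apply Rmult_le_compat_l; [lra|]. apply Rmult_le_compat_l; auto; lra. }
  replace (K1 n k p * (Rpower (zabs (fst p)) s * a * b * c + a * (Rpower (zabs (snd p)) s * b) * c + a * b * (Rpower (zabs (k - fst p - snd p)) s * c)))
    with ((Rpower (zabs (fst p)) s + Rpower (zabs (snd p)) s + Rpower (zabs (k - fst p - snd p)) s) * (K1 n k p * (a * b * c))) by ring.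
  apply Rmult_le_compat_r; auto. apply Rmult_le_pos; auto.
Qed.
Lemma amgm t x y : 0 < t -> x * y <= (t * x ^ 2 + y ^ 2 / t) / 2.
Proof.
  intros Ht. assert (0 <= (t * x - y) ^ 2 / t) by (apply Rmult_le_pos; [apply pow2_ge_0| apply Rlt_le, Rinv_0_lt_compat; auto]).
  replace ((t * x - y) ^ 2 / t) with (t * x ^ 2 + y ^ 2 / t - 2 * (x * y)) in H by (field; lra). lra.
Qed.

Lemma build_T (f : Z -> Z * Z -> C) (W : Z -> C) (e r : Z -> R) eps :
  (forall k, 0 <= e k) -> (forall k, 0 <= r k) -> (forall k, HasSum2 (f k) (W k)) -> 0 < eps ->
  forall L, NoDup L -> exists T, NoDup T /\ (forall q, In q T -> In (fst q) L) /\
    lsumR (fun k => e k * r k * Cmod (W k)) L <=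
    lsumR (fun q => e (fst q) * r (fst q) * Cmod (f (fst q) (snd q))) T + eps * lsumR (fun k => e k * r k) L.
Proof.
  intros He Hr HS Heps L NL. induction NL as [|k L Hk NL IH].
  - exists nil. split; [constructor|]. split; [intros q []|]. unfold lsumR; simpl; lra.
  - destruct IH as [T' [NT' [HT' Hs']]].
    destruct (HasSum2_bound (f k) (W k) (HS k) eps Heps) as [F [NF HF]].
    exists (map (fun p => (k, p)) F ++ T'). split; [|split].
    + apply NoDup_app; auto. apply NoDup_map_inj; auto. intros x y E; inversion E; auto.
      intros q Hq1 Hq2. apply in_map_iff in Hq1. destruct Hq1 as [p [E _]]. subst q.
      apply HT' in Hq2. simpl in Hq2. contradiction.
    + intros q Hq. apply in_app_or in Hq. destruct Hq as [Hq|Hq].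
      * apply in_map_iff in Hq. destruct Hq as [p [E _]]. subst q. left; auto.
      * right; auto.
    + rewrite !lsumR_cons, lsumR_app, lsumR_map. simpl.
      rewrite (lsumR_scal (e k * r k) (fun p => Cmod (f k p))).
      assert (0 <= e k * r k) by (apply Rmult_le_pos; auto).
      assert (e k * r k * Cmod (W k) <= e k * r k * (lsumR (fun p => Cmod (f k p)) F + eps)) by (apply Rmult_le_compat_l; auto).
      lra.
Qed.

Lemma abs_sum_bound s n t v k : 0 < s -> in_Hdot s v -> forall F, NoDup F ->
  lsumR (fun p => Cmod (B30_term n t v v v k p)) F <= (Mb n + real (hsnorm2 0 v) ^ 3) / 2.
Proof.
  intros Hs Hf F NF. destruct (in_Hdot_0 s v Hs Hf) as [H0f [_ H0p]].
  apply Rle_trans with (lsumR (fun p => / 2 * KB n k p + / 2 * (wz 0 v (fst p) * wz 0 v (snd p) * wz 0 v (k - fst p - snd p)%Z)) F).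
  - apply lsumR_le. intros p _. eapply Rle_trans. apply term_bound0.
    pose proof (K1_sq n k p). rewrite <- !x0_sq.
    pose proof (K1_nonneg n k p).
    set (X := x0 v (fst p) * x0 v (snd p) * x0 v (k - fst p - snd p)%Z).
    replace (x0 v (fst p) ^ 2 * x0 v (snd p) ^ 2 * x0 v (k - fst p - snd p)%Z ^ 2) with (X ^ 2) by (unfold X; ring).
    pose proof (pow2_ge_0 (K1 n k p - X)). nra.
  - rewrite lsumR_plus, !lsumR_scal.
    pose proof (KB_sum n k F NF).
    assert (lsumR (fun p => wz 0 v (fst p) * wz 0 v (snd p) * wz 0 v (k - fst p - snd p)%Z) F <= real (hsnorm2 0 v) ^ 3).
    { rewrite <- (lsumR_map (fun q => wz 0 v (fst (snd q)) * wz 0 v (snd (snd q)) * wz 0 v (fst q - fst (snd q) - snd (snd q))%Z) (fun p => (k, p))).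
      replace (real (hsnorm2 0 v) ^ 3) with (real (hsnorm2 0 v) * real (hsnorm2 0 v) * real (hsnorm2 0 v)) by ring.
      apply trip; try apply wz_nonneg; try (apply wz_sum; auto).
      apply NoDup_map_inj; auto. intros x y E; inversion E; auto. }
    lra.
Qed.
Lemma Sb_pos : 0 < Sb. Proof. unfold Sb; lra. Qed.
Lemma Qb_pos : 0 < Qb. Proof. unfold Qb; lra. Qed.
Lemma Mb_pos n : 0 < Mb n.
Proof. unfold Mb. pose proof Sb_pos. pose proof Qb_pos. pose proof (pos_INR n).
  apply Rdiv_lt_0_compat. nra. nra. Qed.

Lemma eps_lemma G X c : 0 <= c -> (forall eps, 0 < eps -> G <= X + eps * c) -> G <= X.
Proof.
  intros Hc H. destruct (Rle_dec G X) as [|Hn]; auto. exfalso.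
  assert (0 < (G - X) / (2 * (c + 1))) by (apply Rdiv_lt_0_compat; lra).
  specialize (H _ H0).
  assert ((G - X) / (2 * (c + 1)) * c < G - X).
  { apply Rle_lt_trans with ((G - X) / (2 * (c + 1)) * (c + 1)). apply Rmult_le_compat_l; lra.
    replace ((G - X) / (2 * (c + 1)) * (c + 1)) with ((G - X) / 2) by (field; lra). lra. }
  lra.
Qed.

Lemma main_G s n t v : 0 < s <= 1 -> in_Hdot s v ->
  forall L, NoDup L -> (forall k, In k L -> k <> 0%Z) ->
  lsumR (fun k => Rpower (IZR (Z.abs k)) (2 * s) * Cmod (B30 n t v v v k) ^ 2) L
    <= 9 * Mb n * real (hsnorm2 s v) * real (hsnorm2 0 v) ^ 2.
Proof.
  intros Hs Hf L NL HL.
  destruct (in_Hdot_0 s v (proj1 Hs) Hf) as [H0f [_ H0p]].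
  set (Hs2 := real (hsnorm2 s v)). set (H0 := real (hsnorm2 0 v)).
  set (f := fun k => B30_term n t v v v k).
  set (W := fun k => B30 n t v v v k).
  set (r := fun k => Rpower (zabs k) s).
  set (e := fun k => r k * Cmod (W k)).
  assert (HSum : forall k, HasSum2 (f k) (W k)).
  { intros k. unfold f, W, B30. apply (Sum2_spec _ ((Mb n + H0 ^ 3) / 2)). intros F NF. apply (abs_sum_bound s); auto. lra. }
  assert (He : forall k, 0 <= e k) by (intros; unfold e, r; apply Rmult_le_pos; [apply Rlt_le, Rpower_pos|apply Cmod_ge_0]).
  assert (Hr : forall k, 0 <= r k) by (intros; unfold r; apply Rlt_le, Rpower_pos).
  rewrite (lsumR_ext _ (fun k => e k * r k * Cmod (W k))).
  2:{ intros k _. unfold e, r, zabs, W. rewrite <- Rpower_sq. ring. }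
  set (G := lsumR (fun k => e k * r k * Cmod (W k)) L).
  assert (EG : G = lsumR (fun k => e k ^ 2) L) by (unfold G; apply lsumR_ext; intros; unfold e; ring).
  pose proof (Mb_pos n) as HM.
  set (tt := / (3 * Mb n)). assert (Htt : 0 < tt) by (unfold tt; apply Rinv_0_lt_compat; lra).
  apply (eps_lemma _ _ (2 * lsumR (fun k => e k * r k) L)).
  { assert (0 <= lsumR (fun k => e k * r k) L) by (apply lsumR_nonneg; intros; apply Rmult_le_pos; auto). lra. }
  intros eps Heps.
  destruct (build_T f W e r eps He Hr HSum Heps L NL) as [T [NT [HT HG]]].
  fold G in HG.
  set (P := fun (a b c : Z -> R) (q : Z * (Z * Z)) => a (fst (snd q)) * b (snd (snd q)) * c (fst q - fst (snd q) - snd (snd q))%Z).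
  assert (Hpt : forall q, In q T -> e (fst q) * r (fst q) * Cmod (f (fst q) (snd q)) <=
    3 * tt / 2 * (e (fst q) ^ 2 * KB n (fst q) (snd q)) +
    / (2 * tt) * (P (wz s v) (wz 0 v) (wz 0 v) q + P (wz 0 v) (wz s v) (wz 0 v) q + P (wz 0 v) (wz 0 v) (wz s v) q)).
  { intros [k p] Hq. simpl fst; simpl snd. 
    assert (Hk : k <> 0%Z) by (apply HL; apply (HT _ Hq)).
    pose proof (term_weight s n t v k p Hk Hs) as TW. fold (f k) in TW. fold (r k) in TW.
    rewrite Rmult_assoc. eapply Rle_trans. apply Rmult_le_compat_l. apply He. exact TW.
    set (a1 := z0 s v (fst p)). set (a2 := x0 v (snd p)). set (a3 := x0 v (k - fst p - snd p)%Z).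
    set (b1 := x0 v (fst p)). set (b2 := z0 s v (snd p)). set (b3 := z0 s v (k - fst p - snd p)%Z).
    assert (EP1 : P (wz s v) (wz 0 v) (wz 0 v) (k, p) = (a1 * a2 * a3) ^ 2) by (unfold P, a1, a2, a3; cbn [fst snd]; rewrite <- (z0_sq s v), <- !(x0_sq v); ring).
    assert (EP2 : P (wz 0 v) (wz s v) (wz 0 v) (k, p) = (b1 * b2 * a3) ^ 2) by (unfold P, b1, b2, a3; cbn [fst snd]; rewrite <- (z0_sq s v), <- !(x0_sq v); ring).
    assert (EP3 : P (wz 0 v) (wz 0 v) (wz s v) (k, p) = (b1 * a2 * b3) ^ 2) by (unfold P, b1, a2, b3; cbn [fst snd]; rewrite <- (z0_sq s v), <- !(x0_sq v); ring).
    rewrite EP1, EP2, EP3.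
    pose proof (amgm tt (e k * K1 n k p) (a1 * a2 * a3) Htt).
    pose proof (amgm tt (e k * K1 n k p) (b1 * b2 * a3) Htt).
    pose proof (amgm tt (e k * K1 n k p) (b1 * a2 * b3) Htt).
    assert (E2 : (e k * K1 n k p) ^ 2 <= e k ^ 2 * KB n k p).
    { rewrite Rpow_mult_distr. apply Rmult_le_compat_l. apply pow2_ge_0. apply K1_sq. }
    replace (e k * (K1 n k p * (a1 * a2 * a3 + b1 * b2 * a3 + b1 * a2 * b3)))
      with ((e k * K1 n k p) * (a1 * a2 * a3) + (e k * K1 n k p) * (b1 * b2 * a3) + (e k * K1 n k p) * (b1 * a2 * b3)) by ring.
    unfold Rdiv in *.
    assert (tt * (e k * K1 n k p) ^ 2 <= tt * (e k ^ 2 * KB n k p)) by (apply Rmult_le_compat_l; lra).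
    rewrite Rinv_mult in *. lra. }
  assert (S1 : lsumR (fun q => e (fst q) ^ 2 * KB n (fst q) (snd q)) T <= Mb n * G).
  { eapply Rle_trans.
    apply (fubini Z.eq_dec _ (fun k => e k ^ 2) (fun q => KB n (fst q) (snd q)) (Mb n) T).
    - intros; apply pow2_ge_0.
    - intros; apply KB_nonneg.
    - intros x L' NL'. simpl. apply KB_sum; auto.
    - exact NT.
    - intros; lra.
    - apply Rmult_le_compat_l; [lra|]. rewrite EG. apply lsumR_incl; auto. apply NoDup_nodup.
      intros x Hx. apply nodup_In in Hx. apply in_map_iff in Hx. destruct Hx as [q [<- Hq]]. auto.
      intros; apply pow2_ge_0. }
  assert (SP1 : lsumR (P (wz s v) (wz 0 v) (wz 0 v)) T <= Hs2 * H0 * H0).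
  { apply trip; auto; try apply wz_nonneg; apply wz_sum; auto. }
  assert (SP2 : lsumR (P (wz 0 v) (wz s v) (wz 0 v)) T <= H0 * Hs2 * H0).
  { apply trip; auto; try apply wz_nonneg; apply wz_sum; auto. }
  assert (SP3 : lsumR (P (wz 0 v) (wz 0 v) (wz s v)) T <= H0 * H0 * Hs2).
  { apply trip; auto; try apply wz_nonneg; apply wz_sum; auto. }
  assert (Hsum : lsumR (fun q => e (fst q) * r (fst q) * Cmod (f (fst q) (snd q))) T <= G / 2 + 9 / 2 * Mb n * Hs2 * H0 ^ 2).
  { eapply Rle_trans. apply lsumR_le. exact Hpt.
    rewrite lsumR_plus, !lsumR_scal, !lsumR_plus.
    assert (0 <= / (2 * tt)) by (apply Rlt_le, Rinv_0_lt_compat; lra).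
    assert (Q1 : 3 * tt / 2 * lsumR (fun q => e (fst q) ^ 2 * KB n (fst q) (snd q)) T <= 3 * tt / 2 * (Mb n * G)).
    { apply Rmult_le_compat_l; [lra|exact S1]. }
    assert (Q2 : / (2 * tt) * (lsumR (P (wz s v) (wz 0 v) (wz 0 v)) T + lsumR (P (wz 0 v) (wz s v) (wz 0 v)) T + lsumR (P (wz 0 v) (wz 0 v) (wz s v)) T)
            <= / (2 * tt) * (3 * (Hs2 * H0 ^ 2))).
    { apply Rmult_le_compat_l; auto. simpl. lra. }
    replace (3 * tt / 2 * (Mb n * G)) with (G / 2) in Q1 by (unfold tt; field; lra).
    replace (/ (2 * tt) * (3 * (Hs2 * H0 ^ 2))) with (9 / 2 * Mb n * Hs2 * H0 ^ 2) in Q2 by (unfold tt; field; lra).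
    lra. }
  lra.
Qed.
Lemma const_bound s n : 0 < s <= 1 -> (1 <= n)%nat -> 9 * Mb n <= (PI ^ 2 / Rpower (INR n) s) ^ 2.
Proof.
  intros Hs Hn. pose proof PI_lb.
  assert (Hn1 : 1 <= INR n) by (apply (le_INR 1); auto).
  assert (HR : Rpower (INR n) s <= INR n + 1).
  { apply Rle_trans with (Rpower (INR n) 1). apply Rle_Rpower; lra. rewrite Rpower_1; lra. }
  pose proof (Rpower_pos (INR n) s).
  assert (HP4 : 45 / 4 * Sb * Qb <= PI ^ 4).
  { assert ((304/100) ^ 4 <= PI ^ 4) by (apply pow_incr; lra). unfold Sb, Qb. simpl in *. lra. }
  set (N := INR n + 1) in *. set (Rp := Rpower (INR n) s) in *.
  replace ((PI ^ 2 / Rp) ^ 2) with (PI ^ 4 / Rp ^ 2) by (field; lra).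
  apply Rle_trans with (PI ^ 4 / N ^ 2).
  - unfold Mb. fold N. replace (9 * (5 * Sb * Qb / (4 * N ^ 2))) with ((45 / 4 * Sb * Qb) / N ^ 2) by (field; lra).
    unfold Rdiv. apply Rmult_le_compat_r; auto. apply Rlt_le, Rinv_0_lt_compat. apply pow_lt; lra.
  - unfold Rdiv. apply Rmult_le_compat_l. apply pow_le. pose proof PI_RGT_0; lra.
    apply Rinv_le_contravar. apply pow_lt; lra. apply pow_incr; lra.
Qed.

Theorem lemma7p9 (s : R) (n : nat) (t : R) (v : seqC) :
  0 < s -> s <= 1 -> (1 <= n)%nat -> in_Hdot s v ->
  in_Hdot s (B30 n t v v v) /\
  hnorm s (B30 n t v v v) <= PI ^ 2 / Rpower (INR n) s * (hnorm 0 v) ^ 2 * hnorm s v.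
Proof.
  intros Hs0 Hs1 Hn Hf.
  assert (Hs : 0 < s <= 1) by lra.
  destruct (in_Hdot_0 s v Hs0 Hf) as [H0f [_ H0p]].
  assert (Hsp : 0 <= real (hsnorm2 s v)).
  { destruct (hs_le s v (real (hsnorm2 s v))) as [_ [_ X]]; auto. intros; apply hs_ub; auto. }
  destruct (hs_le s (B30 n t v v v) (9 * Mb n * real (hsnorm2 s v) * real (hsnorm2 0 v) ^ 2)) as [Hw [Hwb Hw0]].
  { intros A NA HA. apply main_G; auto. }
  split; auto.
  unfold hnorm.
  set (c := PI ^ 2 / Rpower (INR n) s).
  assert (Hc : 0 <= c) by (unfold c; apply Rlt_le, Rdiv_lt_0_compat; [apply pow_lt, PI_RGT_0|apply Rpower_pos]).
  rewrite pow2_sqrt by auto.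
  set (H0 := real (hsnorm2 0 v)) in *. set (Hs2 := real (hsnorm2 s v)) in *.
  pose proof (const_bound s n Hs Hn) as CB. fold c in CB.
  assert (0 <= c * H0 * sqrt Hs2) by (apply Rmult_le_pos; [apply Rmult_le_pos; auto| apply sqrt_pos]).
  rewrite <- (sqrt_pow2 (c * H0 * sqrt Hs2)) by auto.
  apply sqrt_le_1_alt.
  eapply Rle_trans. exact Hwb.
  rewrite !Rpow_mult_distr, pow2_sqrt by auto.
  assert (0 <= Hs2 * H0 ^ 2) by (apply Rmult_le_pos; auto; apply pow2_ge_0).
  replace (9 * Mb n * Hs2 * H0 ^ 2) with ((9 * Mb n) * (Hs2 * H0 ^ 2)) by ring.
  replace (c ^ 2 * H0 ^ 2 * Hs2) with (c ^ 2 * (Hs2 * H0 ^ 2)) by ring.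
  apply Rmult_le_compat_r; auto.
Qed.
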